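(* Let $T$ be a linear operator in $H$ with $W(T)=\mathbb C$. (i) Let $x,y\in\operatorname{dom}(T)$, $\|x\|=\|y\|=1$, be linearly independent. Then, for all but at most three $t\in\mathbb C$, \[ W\big(T|_{(y+tx)^\perp\cap\operatorname{dom}(T)}\big)=\mathbb C. \] (ii) Let $y\in\operatorname{dom}(T)$, $\|y\|=1$, be such that $\{y\}^\perp\cap\operatorname{dom}(T)\neq\{0\}$. Then for every $\varepsilon>0$ there exists $w_\varepsilon\in\operatorname{dom}(T)$ with $\|w_\varepsilon\|=1$, \[ W\big(T|_{\{w_\varepsilon\}^\perp\cap\operatorname{dom}(T)}\big)=\mathbb C\quad\text{and}\quad|\langle Tw_\varepsilon,w_\varepsilon\rangle-\langle Ty,y\rangle|<\varepsilon. \]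
   Context: $H$ is a separable infinite-dimensional complex Hilbert space; $T$ need not be closed, closable or densely defined. $W(T)=\{\langle Tx,x\rangle:x\in\operatorname{dom}(T),\|x\|=1\}$; for a subspace $M\subset\operatorname{dom}(T)$, $T|_M$ is the restriction of $T$ to $M$, so $W(T|_M)=\{\langle Tx,x\rangle:x\in M,\|x\|=1\}$. *)

(* Defs.v *)
From HB Require Import structures.
From mathcomp Require Import all_boot all_order all_algebra.
From mathcomp Require Import complex.
From mathcomp Require Import reals.
Set Implicit Arguments. Unset Strict Implicit. Unset Printing Implicit Defensive.
Import Order.TTheory GRing.Theory Num.Theory.
Local Open Scope ring_scope.

Record Hilbert (R : realType) (H : lmodType R[i]) := {
  ip : H -> H -> R[i];
  ip_linl : forall (a : R[i]) (x y z : H), ip (a *: x + y) z = a * ip x z + ip y z;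
  ip_conj : forall x y : H, ip y x = (ip x y)^*;
  ip_ge0 : forall x : H, 0 <= ip x x;
  ip_def : forall x : H, ip x x = 0 -> x = 0;
  ip_complete : forall u : nat -> H,
    (forall e : R, 0 < e -> exists N : nat, forall m n : nat, (N <= m)%N -> (N <= n)%N ->
        ip (u m - u n) (u m - u n) < (e%:C)%C) ->
    exists l : H, forall e : R, 0 < e -> exists N : nat, forall n : nat, (N <= n)%N ->
        ip (u n - l) (u n - l) < (e%:C)%C;
  ip_separable : exists d : nat -> H, forall (x : H) (e : R), 0 < e ->
    exists n : nat, ip (x - d n) (x - d n) < (e%:C)%C;
  ip_infdim : forall (n : nat) (v : 'I_n -> H), exists x : H,
    forall c : 'I_n -> R[i], x <> \sum_(i < n) c i *: v i
}.

(* A linear operator in H: a (not necessarily closed or dense) linear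
   subspace dom of H and a map T that is linear on dom (values of T outside
   dom are irrelevant). *)
Record LinOp (R : realType) (H : lmodType R[i]) := {
  dom : H -> Prop;
  op : H -> H;
  dom0 : dom 0;
  domD : forall x y, dom x -> dom y -> dom (x + y);
  domZ : forall (a : R[i]) x, dom x -> dom (a *: x);
  op_lin : forall (a : R[i]) x y, dom x -> dom y -> op (a *: x + y) = a *: op x + op y
}.

Definition numrange (R : realType) (H : lmodType R[i]) (HS : Hilbert H)
  (T : LinOp H) (M : H -> Prop) : R[i] -> Prop :=
  fun z => exists x : H, M x /\ ip HS x x = 1 /\ ip HS (op T x) x = z.

Definition numrange_full (R : realType) (H : lmodType R[i]) (HS : Hilbert H)
  (T : LinOp H) (M : H -> Prop) : Prop :=
  forall z : R[i], numrange HS T M z.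

Definition perp_dom (R : realType) (H : lmodType R[i]) (HS : Hilbert H)
  (T : LinOp H) (v : H) : H -> Prop :=
  fun z => dom T z /\ ip HS z v = 0.

(* Main.v *)
Require Import Defs.
From HB Require Import structures.
From mathcomp Require Import all_boot all_order all_algebra.
From mathcomp Require Import complex.
From mathcomp Require Import reals.
From mathcomp Require Import ring lra.
Import Order.TTheory GRing.Theory Num.Theory.
Local Open Scope ring_scope.
Set Implicit Arguments. Unset Strict Implicit. Unset Printing Implicit Defensive.

Notation Rp := complex.Re.
Notation Ip := complex.Im.

Section CplxH.
Variable R : realType.
Implicit Types (x y z : R[i]) (r s : R).

Lemma RpD x y : Rp (x + y) = Rp x + Rp y. Proof. by case: x => a b; case: y. Qed.
Lemma IpD x y : Ip (x + y) = Ip x + Ip y. Proof. by case: x => a b; case: y. Qed.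
Lemma RpN x : Rp (- x) = - Rp x. Proof. by case: x. Qed.
Lemma IpN x : Ip (- x) = - Ip x. Proof. by case: x. Qed.
Lemma RpB x y : Rp (x - y) = Rp x - Rp y. Proof. by rewrite RpD RpN. Qed.
Lemma IpB x y : Ip (x - y) = Ip x - Ip y. Proof. by rewrite IpD IpN. Qed.
Lemma RpM x y : Rp (x * y) = Rp x * Rp y - Ip x * Ip y. Proof. by case: x => a b; case: y. Qed.
Lemma IpM x y : Ip (x * y) = Rp x * Ip y + Ip x * Rp y. Proof. by case: x => a b; case: y. Qed.
Lemma RpJ x : Rp (x^*) = Rp x. Proof. by case: x. Qed.
Lemma IpJ x : Ip (x^*) = - Ip x. Proof. by case: x. Qed.
Lemma RpC r : Rp (r%:C%C) = r. Proof. by []. Qed.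
Lemma IpC r : Ip (r%:C%C) = 0. Proof. by []. Qed.
Lemma Rp0 : Rp (0 : R[i]) = 0. Proof. by []. Qed.
Lemma Ip0 : Ip (0 : R[i]) = 0. Proof. by []. Qed.
Lemma Rp1 : Rp (1 : R[i]) = 1. Proof. by []. Qed.
Lemma Ip1 : Ip (1 : R[i]) = 0. Proof. by []. Qed.
Lemma RpCM r x : Rp (r%:C%C * x) = r * Rp x.
Proof. by rewrite RpM RpC IpC mul0r subr0. Qed.
Lemma IpCM r x : Ip (r%:C%C * x) = r * Ip x.
Proof. by rewrite IpM RpC IpC mul0r addr0. Qed.
Lemma cplx_eq x y : Rp x = Rp y -> Ip x = Ip y -> x = y.
Proof. by case: x => a b; case: y => c d /= -> ->. Qed.
Lemma cplx_eq0 x : Rp x = 0 -> Ip x = 0 -> x = 0.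
Proof. by case: x => a b /= -> ->. Qed.

Lemma neq0_Ip x : Ip x != 0 -> x != 0.
Proof. by apply: contra => /eqP ->. Qed.
Lemma neq0_Rp x : Rp x != 0 -> x != 0.
Proof. by apply: contra => /eqP ->. Qed.

Definition sq x := Rp x ^+ 2 + Ip x ^+ 2.
Lemma sq_ge0 x : 0 <= sq x. Proof. by rewrite addr_ge0 ?sqr_ge0. Qed.
Lemma sqM x y : sq (x * y) = sq x * sq y.
Proof. rewrite /sq RpM IpM; ring. Qed.
Lemma mulJ x : x * x^* = (sq x)%:C%C.
Proof. apply: cplx_eq; rewrite ?RpM ?IpM RpJ IpJ ?RpC ?IpC /sq; ring. Qed.
Lemma sq_eq0 x : sq x = 0 -> x = 0.
Proof.
move=> h; have h1 := sqr_ge0 (Rp x); have h2 := sqr_ge0 (Ip x).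
have e1 : Rp x ^+ 2 = 0 by rewrite /sq in h; lra.
have e2 : Ip x ^+ 2 = 0 by rewrite /sq in h; lra.
by apply: cplx_eq0; apply/eqP; rewrite -sqrf_eq0; apply/eqP.
Qed.
Lemma reCS x y : 2 * Rp (x * y^*) <= sq x + sq y.
Proof.
rewrite RpM RpJ IpJ /sq.
have := sqr_ge0 (Rp x - Rp y); have := sqr_ge0 (Ip x - Ip y).
rewrite !expr2; lra.
Qed.
Lemma sqC r : sq (r%:C%C) = r ^+ 2. Proof. by rewrite /sq RpC IpC expr0n addr0. Qed.
Lemma sqJ x : sq (x^*) = sq x. Proof. by rewrite /sq RpJ IpJ sqrrN. Qed.
End CplxH.

Ltac cplx_ring := apply: cplx_eq;
  rewrite ?(RpD, IpD, RpN, IpN, RpM, IpM, RpJ, IpJ, RpC, IpC, Rp0, Ip0, Rp1, Ip1); ring.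


Section HilbH.
Variable R : realType.
Variable H : lmodType R[i].
Variable HS : Hilbert H.
Local Notation ip := (ip HS).
Implicit Types (u v w : H) (a b : R[i]).

Lemma ipDl u v w : ip (u + v) w = ip u w + ip v w.
Proof. by have := ip_linl HS 1 u v w; rewrite scale1r mul1r. Qed.
Lemma ip0l w : ip 0 w = 0.
Proof.
have := ip_linl HS 1 0 0 w; rewrite scale1r addr0 mul1r => h.
by have := congr1 (fun t => t - ip 0 w) h; rewrite subrr addrK.
Qed.
Lemma ipZl a u w : ip (a *: u) w = a * ip u w.
Proof. by have := ip_linl HS a u 0 w; rewrite addr0 ip0l addr0. Qed.
Lemma ipNl u w : ip (- u) w = - ip u w.
Proof. by rewrite -scaleN1r ipZl mulN1r. Qed.
Lemma ipBl u v w : ip (u - v) w = ip u w - ip v w.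
Proof. by rewrite ipDl ipNl. Qed.
Lemma ipDr u v w : ip w (u + v) = ip w u + ip w v.
Proof. by rewrite (ip_conj HS (u + v) w) ipDl rmorphD (ip_conj HS u w) (ip_conj HS v w). Qed.
Lemma ipZr a u w : ip w (a *: u) = a^* * ip w u.
Proof. by rewrite (ip_conj HS (a *: u) w) ipZl rmorphM (ip_conj HS u w). Qed.
Lemma ip0r w : ip w 0 = 0.
Proof. by rewrite -(scale0r 0) ipZr rmorph0 mul0r. Qed.
Lemma ipNr u w : ip w (- u) = - ip w u.
Proof. by rewrite -scaleN1r ipZr rmorphN1 mulN1r. Qed.
Lemma ipBr u v w : ip w (u - v) = ip w u - ip w v.
Proof. by rewrite ipDr ipNr. Qed.

Definition Nm u := Rp (ip u u).
Lemma ipself u : ip u u = (Nm u)%:C%C.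
Proof.
have := ip_ge0 HS u; rewrite lecE => /andP[/eqP h _].
by apply: cplx_eq => //=; rewrite -h.
Qed.
Lemma Nm_ge0 u : 0 <= Nm u.
Proof. by have := ip_ge0 HS u; rewrite lecE => /andP[_ h]. Qed.
Lemma Nm_eq0 u : Nm u = 0 -> u = 0.
Proof. move=> h; apply (@ip_def _ _ HS u); by rewrite ipself h. Qed.
Lemma Nm_gt0 u : u != 0 -> 0 < Nm u.
Proof.
move=> hu; rewrite lt_def Nm_ge0 andbT; apply/eqP => h.
by move/eqP: hu; apply; apply: Nm_eq0.
Qed.
Lemma Nm0 : Nm 0 = 0. Proof. by rewrite /Nm ip0l. Qed.

Lemma ipCS g w n : 2 * Rp (g * ip w n) <= sq g * Nm w + Nm n.
Proof.
have h := Nm_ge0 (g *: w - n).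
rewrite /Nm ipBl !ipBr !ipZl !ipZr in h.
rewrite -/(Nm w) -/(Nm n) !ipself in h.
rewrite (ip_conj HS w n) in h.
move: h; rewrite /sq !RpB !RpM !IpM !RpJ !IpJ !RpC !IpC.
lra.
Qed.

Lemma NmE u : ip u u = (Nm u)%:C%C. Proof. exact: ipself. Qed.

Lemma ipCS1 u v : sq (ip u v) <= Nm u * Nm v.
Proof.
have [u0|unz] := eqVneq u 0.
  by rewrite u0 ip0l Nm0 mul0r /sq Rp0 Ip0 expr0n addr0.
have hu := Nm_gt0 unz.
set X := ip u v; set r := (Nm u)^-1.
have h := ipCS ((r)%:C%C * X^*) u v.
rewrite -/X -mulrA [X^* * X]mulrC mulJ -rmorphM RpC sqM sqC sqJ in h.
have rN : r * Nm u = 1 by rewrite mulVf // gt_eqF.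
have r0 : 0 < r by rewrite invr_gt0.
have e : r ^+ 2 * sq X * Nm u = r * sq X.
  by rewrite expr2 -mulrA -mulrA [sq X * _]mulrC !mulrA -[r * r * Nm u]mulrA rN mulr1.
rewrite e in h.
have h2 : r * sq X <= Nm v by lra.
have := ler_wpM2l (ltW hu) h2.
by rewrite mulrA [Nm u * r]mulrC rN mul1r.
Qed.

Lemma Nm_add u v : Nm (u + v) <= 2 * Nm u + 2 * Nm v.
Proof.
have h := ipCS 1 u v.
rewrite mul1r /sq Rp1 Ip1 expr0n addr0 expr1n mul1r in h.
rewrite /Nm !ipDl !ipDr (ip_conj HS u v) -/(Nm u) -/(Nm v) !RpD RpJ.
lra.
Qed.

Lemma Nm_scale a u : Nm (a *: u) = sq a * Nm u.
Proof.
by rewrite /Nm ipZl ipZr mulrA mulJ ipself -rmorphM RpC.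
Qed.

Lemma ipexp a u v :
  ip (a *: u + v) (a *: u + v) = a * a^* * ip u u + a * ip u v + a^* * ip v u + ip v v.
Proof. rewrite ipDl !ipDr !ipZl !ipZr; ring. Qed.
End HilbH.
From Stdlib Require Import Classical.
From mathcomp Require Import classical_sets.

Section HP.
Variable R : realType.

Lemma hp0 (K : R[i] -> Prop) (p : R) :
  (forall k1 k2 (l : R), K k1 -> K k2 -> 0 <= l -> l <= 1 ->
     K ((l%:C%C) * k1 + ((1 - l)%:C%C) * k2)) ->
  ~ K 0 -> 0 < p -> K (p%:C%C) ->
  exists w : R[i], w != 0 /\ forall k, K k -> Rp (w * k) <= 0.
Proof.
move=> conv nK0 p0 Kp.
have Kreal : forall k, K k -> Ip k = 0 -> 0 < Rp k.
  move=> k Kk hk; rewrite ltNge; apply/negP => ka; apply: nK0.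
  set a := Rp k in ka *.
  have pa : 0 < p - a by lra.
  set l := p / (p - a).
  have l0 : 0 <= l by rewrite divr_ge0 // ltW.
  have l1 : l <= 1 by rewrite ler_pdivrMr // mul1r; lra.
  have := conv k (p%:C%C) l Kk Kp l0 l1.
  suff -> : (l%:C%C) * k + ((1 - l)%:C%C) * p%:C%C = 0 by [].
  apply: cplx_eq0; rewrite ?RpD ?IpD ?RpCM ?IpCM ?RpC ?IpC -/a ?hk.
    rewrite /l; field; lra.
  by rewrite mulr0 mulr0 addr0.
have F : forall k1 k2, K k1 -> K k2 -> 0 < Ip k1 -> Ip k2 < 0 ->
    0 < Rp k1 * (- Ip k2) + Rp k2 * Ip k1.
  move=> k1 k2 K1 K2 b1 b2.
  have d0 : 0 < Ip k1 - Ip k2 by lra.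
  set l := - Ip k2 / (Ip k1 - Ip k2).
  have l0 : 0 <= l by rewrite divr_ge0 // ltW // oppr_gt0.
  have l1 : l <= 1 by rewrite ler_pdivrMr // mul1r; lra.
  have Kr := conv k1 k2 l K1 K2 l0 l1.
  have hr := Kreal _ Kr.
  rewrite RpD IpD !RpCM !IpCM in hr.
  have e1 : l * Ip k1 + (1 - l) * Ip k2 = 0 by rewrite /l; field; lra.
  have := hr e1.
  have -> : l * Rp k1 + (1 - l) * Rp k2 =
     (Rp k1 * (- Ip k2) + Rp k2 * Ip k1) / (Ip k1 - Ip k2).
    by rewrite /l; field; lra.
  by move=> h; have := mulr_gt0 h d0; rewrite divfK // gt_eqF.
case: (classic (exists k, K k /\ Ip k < 0)) => [[k2 [K2 hk2]] | hL]; last first.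
  exists (Complex 0 1); split; first by apply: neq0_Ip; rewrite /= oner_eq0.
  move=> k Kk; rewrite RpM /= mul0r sub0r mul1r oppr_le0.
  by rewrite leNgt; apply/negP => h; apply: hL; exists k.
case: (classic (exists k, K k /\ 0 < Ip k)) => [[k1 [K1 hk1]] | hU]; last first.
  exists (Complex 0 (-1)); split; first by apply: neq0_Ip; rewrite /= oppr_eq0 oner_eq0.
  move=> k Kk; rewrite RpM /= mul0r sub0r mulN1r opprK.
  by rewrite leNgt; apply/negP => h; apply: hU; exists k.
pose A : set R := fun x => exists k, K k /\ 0 < Ip k /\ x = - Rp k / Ip k.
have ub : forall k, K k -> Ip k < 0 -> ubound A (Rp k / (- Ip k)).
  move=> k Kk hk x [k' [Kk' [hk' ->]]].
  have hF := F _ _ Kk' Kk hk' hk.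
  rewrite -subr_ge0.
  have -> : Rp k / - Ip k - - Rp k' / Ip k' =
      (Rp k' * (- Ip k) + Rp k * Ip k') / (Ip k' * (- Ip k)).
    by field; apply/andP; split; apply/negP => /eqP h; lra.
  by rewrite divr_ge0 // ?ltW // mulr_gt0 // oppr_gt0.
have hs : has_sup A.
  split; first by exists (- Rp k1 / Ip k1); exists k1.
  by exists (Rp k2 / (- Ip k2)); apply: ub.
set mu := sup A.
exists (Complex (-1) mu); split.
  by apply: neq0_Rp; rewrite /= oppr_eq0 oner_eq0.
move=> k Kk; rewrite RpM /=.
suff : 0 <= Rp k + mu * Ip k by lra.
case: (ltgtP (Ip k) 0) => hk.
- have h1 : mu <= Rp k / (- Ip k).
    by apply: ge_sup; [exists (- Rp k1 / Ip k1); exists k1 | apply: ub].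
  rewrite ler_pdivlMr ?oppr_gt0 // in h1; lra.
- have h1 : - Rp k / Ip k <= mu by apply: sup_upper_bound => //; exists k.
  rewrite ler_pdivrMr // in h1; lra.
- have := Kreal k Kk hk; rewrite hk mulr0 addr0; lra.
Qed.

Lemma sq_gt0 (x : R[i]) : x != 0 -> 0 < sq x.
Proof.
move=> hx; rewrite lt_def sq_ge0 andbT; apply/negP => /eqP h.
by move/eqP: hx; apply; apply: sq_eq0.
Qed.

Lemma hp (K : R[i] -> Prop) :
  (forall k1 k2 (l : R), K k1 -> K k2 -> 0 <= l -> l <= 1 ->
     K ((l%:C%C) * k1 + ((1 - l)%:C%C) * k2)) ->
  ~ K 0 ->
  exists w : R[i], w != 0 /\ forall k, K k -> Rp (w * k) <= 0.
Proof.
move=> conv nK0.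
case: (classic (exists k0, K k0)) => [[k0 K0] | hE]; last first.
  exists 1; split; first exact: oner_neq0.
  by move=> k Kk; exfalso; apply: hE; exists k.
have k0nz : k0 != 0 by apply/eqP => h; apply: nK0; rewrite -h.
have k0J : k0^* != 0 by rewrite conjC_eq0.
pose K' := fun k => K (k / k0^*).
have conv' : forall k1 k2 (l : R), K' k1 -> K' k2 -> 0 <= l -> l <= 1 ->
     K' ((l%:C%C) * k1 + ((1 - l)%:C%C) * k2).
  move=> k1 k2 l h1 h2 l0 l1; rewrite /K'.
  have := conv _ _ l h1 h2 l0 l1.
  by rewrite mulrDl !mulrA.
have nK'0 : ~ K' 0 by rewrite /K' mul0r.
have Kp : K' ((sq k0)%:C%C) by rewrite /K' -mulJ mulfK.
have [w' [w'nz hw']] := hp0 conv' nK'0 (sq_gt0 k0nz) Kp.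
exists (w' * k0^*); split; first by rewrite mulf_neq0.
move=> k Kk.
have : K' (k * k0^*) by rewrite /K' mulfK.
have -> : w' * k0^* * k = w' * (k * k0^*) by ring.
exact: hw'.
Qed.
End HP.
Section Core.
Variable R : realType.
Variable H : lmodType R[i].
Variable HS : Hilbert H.
Local Notation ip := (ip HS).
Local Notation Nm := (Nm HS).
Variable M : H -> Prop.
Hypothesis M0 : M 0.
Hypothesis MD : forall u v, M u -> M v -> M (u + v).
Hypothesis MZ : forall (a : R[i]) u, M u -> M (a *: u).
Variable S : H -> H -> R[i].
Hypothesis SDl : forall u v w, M u -> M v -> M w -> S (u + v) w = S u w + S v w.
Hypothesis SZl : forall a u w, M u -> M w -> S (a *: u) w = a * S u w.
Hypothesis SDr : forall u v w, M u -> M v -> M w -> S u (v + w) = S u v + S u w.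
Hypothesis SZr : forall a u v, M u -> M v -> S u (a *: v) = a^* * S u v.

Lemma Sexp a u v : M u -> M v ->
  S (a *: u + v) (a *: u + v) = a * a^* * S u u + a * S u v + a^* * S v u + S v v.
Proof.
move=> Mu Mv.
have Mau := MZ a Mu.
have Mw := MD Mau Mv.
rewrite SDl // !SDr // !SZl // !SZr //.
ring.
Qed.

Lemma conjR (r : R) : (r%:C%C)^* = r%:C%C.
Proof. by apply: cplx_eq; rewrite ?RpJ ?IpJ ?RpC ?IpC ?oppr0. Qed.

Lemma core u1 u2 (l : R) : M u1 -> M u2 -> u1 != 0 -> u2 != 0 ->
  S u1 u1 = ip u1 u1 -> S u2 u2 = 0 -> 0 <= l -> l <= 1 ->
  exists w, M w /\ w != 0 /\ S w w = l%:C%C * ip w w.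
Proof.
move=> M1 M2 nz1 nz2 S11 S22 l0 l1.
set A := S u1 u2; set B := S u2 u1.
pose e := if A - B^* == 0 then 1 else A - B^*.
have enz : e != 0.
  by rewrite /e; case: (eqVneq (A - B^*) 0) => h; rewrite ?h ?eqxx ?oner_eq0 // (negPf h).
have dreal : Ip (e^* * A + e * B) = 0.
  rewrite /e; case: (eqVneq (A - B^*) 0) => h.
    have hA : A = B^* by apply/eqP; rewrite -subr_eq0 h.
    by rewrite rmorph1 !mul1r IpD hA IpJ addNr.
  have -> : (A - B^*)^* * A + (A - B^*) * B = A * A^* - B * B^*.
    by cplx_ring.
  by rewrite !mulJ IpB !IpC subr0.
pose u2' := e *: u2.
have M2' : M u2' by apply: MZ.
have nz2' : u2' != 0 by rewrite scaler_eq0 negb_or enz.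
have S12 : S u1 u2' = e^* * A by rewrite SZr.
have S21 : S u2' u1 = e * B by rewrite SZl.
have S22' : S u2' u2' = 0 by rewrite SZl ?SZr // S22 !mulr0.
set d := e^* * A + e * B in dreal.
set dr := Rp d.
have hd : d = dr%:C%C by apply: cplx_eq; rewrite ?RpC ?IpC.
set n1 := Nm u1; set n2 := Nm u2'.
have n1p : 0 < n1 := Nm_gt0 HS nz1.
have n2p : 0 < n2 := Nm_gt0 HS nz2'.
set I12 := ip u1 u2'.
set E := 2 * Rp I12.
have hE : I12 + I12^* = E%:C%C.
  apply: cplx_eq; rewrite ?RpD ?IpD ?RpJ ?IpJ ?RpC ?IpC /E //; [lra | by rewrite addrN].
pose al := (1 - l) * n1; pose be := dr - l * E; pose ga := l * n2.
have al0 : 0 <= al by rewrite /al mulr_ge0 // ?subr_ge0 // ltW.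
have ga0 : 0 <= ga by rewrite /ga mulr_ge0 // ltW.
have [al_eq0 | al_neq0] := eqVneq al 0.
  exists u1; split => //; split => //.
  have -> : l = 1.
    move: al_eq0; rewrite /al => /eqP; rewrite mulf_eq0 (gt_eqF n1p) orbF subr_eq0.
    by move/eqP.
  by rewrite S11 mul1r.
have alp : 0 < al by rewrite lt_def al_neq0 al0.
pose D := be ^+ 2 + 4 * al * ga.
have D0 : 0 <= D by rewrite /D; have := sqr_ge0 be; have := mulr_ge0 al0 ga0; lra.
pose s := Num.sqrt D.
have s2 : s ^+ 2 = D by rewrite sqr_sqrtr.
pose X := (- be + s) / (2 * al).
have hX : al * X ^+ 2 + be * X - ga = 0.
  have -> : al * X ^+ 2 + be * X - ga = (s ^+ 2 - be ^+ 2 - 4 * al * ga) / (4 * al).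
    by rewrite /X; field; rewrite al_neq0.
  rewrite s2 /D.
  have -> : be ^+ 2 + 4 * al * ga - be ^+ 2 - 4 * al * ga = 0 by ring.
  by rewrite mul0r.
pose w := X%:C%C *: u1 + u2'.
have Mw : M w by rewrite /w; apply: MD => //; apply: MZ.
have Sww : S w w = (X * X * n1 + X * dr)%:C%C.
  rewrite /w Sexp // S11 S12 S21 S22' conjR (ipself HS u1) -/n1.
  have hd' : e^* * A = dr%:C%C - e * B by rewrite -hd /d; ring.
  rewrite hd' addr0 !rmorphD !rmorphM /=; ring.
have Iww : ip w w = (X * X * n1 + X * E + n2)%:C%C.
  rewrite /w (ipexp HS) conjR (ipself HS u1) (ipself HS u2') -/n1 -/n2 -/I12.
  rewrite (ip_conj HS u1 u2') -/I12.
  have hI : I12^* = E%:C%C - I12 by rewrite -hE; ring.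
  rewrite hI !rmorphD !rmorphM /=; ring.
exists w; split => //; split.
  apply/eqP => w0.
  have hu : u2' = (- X)%:C%C *: u1.
    by apply: (addrI (X%:C%C *: u1)); rewrite rmorphN scaleNr subrr; exact: w0.
  have Mxu := MZ (- X)%:C%C M1.
  have := S22'; rewrite hu SZl // SZr // S11 (ipself HS u1) conjR -/n1.
  rewrite -!rmorphM => /eqP; rewrite -(rmorph0 (real_complex R)) => /eqP /complexI /eqP.
  rewrite !mulf_eq0 (gt_eqF n1p) orbF oppr_eq0 orbb => /eqP X0.
  by move/eqP: nz2'; apply; rewrite hu X0 oppr0 scale0r.
rewrite Sww Iww -rmorphM; congr (_ %:C%C).
apply/eqP; rewrite -subr_eq0; apply/eqP.
rewrite -hX /al /be /ga; ring.
Qed.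
End Core.
Section Conv.
Variable R : realType.
Variable H : lmodType R[i].
Variable HS : Hilbert H.
Local Notation ip := (ip HS).
Local Notation Nm := (Nm HS).
Variable M : H -> Prop.
Hypothesis M0 : M 0.
Hypothesis MD : forall u v, M u -> M v -> M (u + v).
Hypothesis MZ : forall (a : R[i]) u, M u -> M (a *: u).
Variable S : H -> H -> R[i].
Hypothesis SDl : forall u v w, M u -> M v -> M w -> S (u + v) w = S u w + S v w.
Hypothesis SZl : forall a u w, M u -> M w -> S (a *: u) w = a * S u w.
Hypothesis SDr : forall u v w, M u -> M v -> M w -> S u (v + w) = S u v + S u w.
Hypothesis SZr : forall a u v, M u -> M v -> S u (a *: v) = a^* * S u v.

Definition Wc z := exists u, M u /\ u != 0 /\ S u u = z * ip u u.

Lemma TH z1 z2 (l : R) : Wc z1 -> Wc z2 -> 0 <= l -> l <= 1 ->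
  Wc ((l%:C%C) * z1 + ((1 - l)%:C%C) * z2).
Proof.
move=> [u1 [M1 [nz1 h1]]] [u2 [M2 [nz2 h2]]] l0 l1.
have e1 : (1 - l)%:C%C = 1 - l%:C%C :> R[i] by rewrite rmorphB rmorph1.
case: (eqVneq z1 z2) => [<- | hz].
  exists u1; split => //; split => //; rewrite h1 e1; congr (_ * _); ring.
have Dnz : z1 - z2 != 0 by rewrite subr_eq0.
pose Sh u v := (S u v - z2 * ip u v) / (z1 - z2).
have ShDl : forall u v w, M u -> M v -> M w -> Sh (u + v) w = Sh u w + Sh v w.
  by move=> u v w Mu Mv Mw; rewrite /Sh SDl // ipDl; ring.
have ShZl : forall a u w, M u -> M w -> Sh (a *: u) w = a * Sh u w.
  by move=> a u w Mu Mw; rewrite /Sh SZl // ipZl; ring.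
have ShDr : forall u v w, M u -> M v -> M w -> Sh u (v + w) = Sh u v + Sh u w.
  by move=> u v w Mu Mv Mw; rewrite /Sh SDr // ipDr; ring.
have ShZr : forall a u v, M u -> M v -> Sh u (a *: v) = a^* * Sh u v.
  by move=> a u v Mu Mv; rewrite /Sh SZr // ipZr; ring.
have Sh11 : Sh u1 u1 = ip u1 u1 by rewrite /Sh h1; field.
have Sh22 : Sh u2 u2 = 0 by rewrite /Sh h2 subrr mul0r.
have [w [Mw [nzw hw]]] :=
  core MD MZ ShDl ShZl ShDr ShZr M1 M2 nz1 nz2 Sh11 Sh22 l0 l1.
exists w; split => //; split => //.
have -> : S w w = Sh w w * (z1 - z2) + z2 * ip w w by rewrite /Sh; field.
rewrite hw e1; ring.
Qed.

Lemma S00 : S 0 0 = 0.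
Proof. by have := SZl 0 M0 M0; rewrite scale0r mul0r. Qed.

Lemma SEP z : ~ Wc z ->
  exists om : R[i], om != 0 /\ forall u, M u -> Rp (om * (S u u - z * ip u u)) <= 0.
Proof.
move=> nW.
pose K k := Wc (k + z).
have conv : forall k1 k2 (l : R), K k1 -> K k2 -> 0 <= l -> l <= 1 ->
     K ((l%:C%C) * k1 + ((1 - l)%:C%C) * k2).
  move=> k1 k2 l h1 h2 l0 l1; rewrite /K.
  have := TH h1 h2 l0 l1.
  have -> : (l%:C%C) * (k1 + z) + ((1 - l)%:C%C) * (k2 + z) =
            (l%:C%C) * k1 + ((1 - l)%:C%C) * k2 + z.
    by rewrite rmorphB rmorph1; ring.
  by [].
have nK0 : ~ K 0 by rewrite /K add0r.
have [om [omnz hom]] := hp conv nK0.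
exists om; split => // u Mu.
have [u0 | unz] := eqVneq u 0.
  by rewrite u0 S00 ip0l mulr0 subrr mulr0 Rp0.
have hn := Nm_gt0 HS unz.
have Inz : ip u u != 0.
  by rewrite (ipself HS u); apply: neq0_Rp; rewrite RpC gt_eqF.
pose k := S u u / ip u u - z.
have Kk : K k.
  by exists u; split => //; split => //; rewrite /k subrK divfK.
have := hom k Kk.
have -> : S u u - z * ip u u = k * (Nm u)%:C%C.
  by rewrite -(ipself HS u) /k; field.
rewrite mulrA [_ * (Nm u)%:C%C]mulrC RpCM => h.
by rewrite mulr_ge0_le0 // ltW.
Qed.
End Conv.
Lemma conjK (R : realType) (x : R[i]) : x^*^* = x.
Proof. by apply: cplx_eq; rewrite ?RpJ ?IpJ ?opprK. Qed.

Lemma sqN (R : realType) (x : R[i]) : sq (- x) = sq x.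
Proof. by rewrite /sq RpN IpN !sqrrN. Qed.

Section App.
Variable R : realType.
Variable H : lmodType R[i].
Variable HS : Hilbert H.
Variable T : LinOp H.
Local Notation ip := (ip HS).
Local Notation Nm := (Nm HS).
Local Notation dom := (dom T).
Local Notation op := (op T).

Lemma op0 : op 0 = 0.
Proof.
have := @op_lin _ _ T 1 0 0 (dom0 T) (dom0 T); rewrite scale1r addr0 scale1r => h.
by have := congr1 (fun t => t - op 0) h; rewrite subrr addrK.
Qed.
Lemma opD u v : dom u -> dom v -> op (u + v) = op u + op v.
Proof. by move=> du dv; have := @op_lin _ _ T 1 u v du dv; rewrite !scale1r. Qed.
Lemma opZ a u : dom u -> op (a *: u) = a *: op u.
Proof. by move=> du; have := @op_lin _ _ T a u 0 du (dom0 T); rewrite !addr0 op0 addr0. Qed.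
Lemma domD' u v : dom u -> dom v -> dom (u + v).
Proof. exact: domD. Qed.
Lemma domZ' a u : dom u -> dom (a *: u).
Proof. exact: domZ. Qed.

Definition q u := ip (op u) u.
Definition Sop u v := ip (op u) v.

Lemma qexp2 n p a : dom n -> dom p ->
  q (n + a *: p) = q n + a^* * ip (op n) p + a * ip (op p) n + a * a^* * q p.
Proof.
move=> dn dp; have dap := domZ' a dp; rewrite /q opD // opZ //.
rewrite !ipDl !ipDr !ipZl !ipZr; ring.
Qed.

Lemma qexp3 n p1 p2 a b : dom n -> dom p1 -> dom p2 ->
  q (n + a *: p1 + b *: p2) = q n + a^* * ip (op n) p1 + b^* * ip (op n) p2
    + a * ip (op p1) n + b * ip (op p2) n + a * a^* * q p1 + b * b^* * q p2
    + a * b^* * ip (op p1) p2 + b * a^* * ip (op p2) p1.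
Proof.
move=> dn d1 d2; have da := domZ' a d1; have db := domZ' b d2.
have dna := domD' dn da.
rewrite /q !opD // !opZ //.
rewrite !ipDl !ipDr !ipZl !ipZr; ring.
Qed.

Definition Bdd (M : H -> Prop) (om : R[i]) :=
  exists c : R, forall u, M u -> Rp (om * q u) <= c * Nm u.

Lemma nr_of_Wc (M : H -> Prop) z :
  (forall u, M u -> dom u) -> (forall a u, M u -> M (a *: u)) ->
  Wc HS M Sop z -> numrange HS T M z.
Proof.
move=> Mdom MZ [u [Mu [unz hu]]].
have hn := Nm_gt0 HS unz.
set n := Nm u in hn.
pose c := (Num.sqrt n)^-1.
have sp : 0 < Num.sqrt n by rewrite sqrtr_gt0.
have hc : c * c * n = 1.
  rewrite /c -expr2 exprVn sqr_sqrtr ?ltW // mulVf // gt_eqF //.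
exists (c%:C%C *: u); split; first exact: MZ.
rewrite /Sop in hu.
split.
  by rewrite ipZl ipZr conjR (ipself HS u) -/n -!rmorphM mulrA hc rmorph1.
have du := Mdom _ Mu.
rewrite opZ // ipZl ipZr conjR hu (ipself HS u) -/n.
have -> : c%:C%C * (c%:C%C * (z * n%:C%C)) = z * (c * c * n)%:C%C.
  by rewrite !rmorphM; ring.
by rewrite hc mulr1.
Qed.

End App.
Section App2.
Variable R : realType.
Variable H : lmodType R[i].
Variable HS : Hilbert H.
Variable T : LinOp H.
Local Notation ip := (ip HS).
Local Notation Nm := (Nm HS).
Local Notation dom := (dom T).
Local Notation op := (op T).
Local Notation q := (q HS T).
Local Notation Bdd := (Bdd HS T).

Lemma Nm_sub u v : Nm (u - v) <= 2 * Nm u + 2 * Nm v.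
Proof.
have := Nm_add HS u (- v).
by rewrite -scaleN1r Nm_scale sqN /sq Rp1 Ip1 expr1n expr0n addr0 mul1r.
Qed.

Lemma sep_app (M : H -> Prop) :
  M 0 -> (forall u v, M u -> M v -> M (u + v)) ->
  (forall (a : R[i]) u, M u -> M (a *: u)) -> (forall u, M u -> dom u) ->
  ~ numrange_full HS T M -> exists om, om != 0 /\ Bdd M om.
Proof.
move=> M0 MD MZ Mdom nf.
have [z nz] := not_all_ex_not _ _ nf.
have nW : ~ Wc HS M (Sop HS T) z by move=> h; apply: nz; apply: nr_of_Wc.
have SDl : forall u v w, M u -> M v -> M w ->
    Sop HS T (u + v) w = Sop HS T u w + Sop HS T v w.
  by move=> u v w Mu Mv Mw; have du := Mdom _ Mu; have dv := Mdom _ Mv; rewrite /Sop opD // ipDl.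
have SZl : forall a u w, M u -> M w -> Sop HS T (a *: u) w = a * Sop HS T u w.
  by move=> a u w Mu Mw; have du := Mdom _ Mu; rewrite /Sop opZ // ipZl.
have SDr : forall u v w, M u -> M v -> M w ->
    Sop HS T u (v + w) = Sop HS T u v + Sop HS T u w.
  by move=> u v w Mu Mv Mw; rewrite /Sop ipDr.
have SZr : forall a u v, M u -> M v -> Sop HS T u (a *: v) = a^* * Sop HS T u v.
  by move=> a u v Mu Mv; rewrite /Sop ipZr.
have [om [omnz hom]] := SEP M0 MD MZ SDl SZl SDr SZr nW.
exists om; split => //; exists (Rp (om * z)) => u Mu.
have := hom u Mu; rewrite (ipself HS u) mulrBr RpB.
rewrite mulrA [_ * (Nm u)%:C%C]mulrC RpCM.
rewrite /Sop -/(q u); lra.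
Qed.

Lemma bdd_dom om : numrange_full HS T dom -> Bdd dom om -> om = 0.
Proof.
move=> hf [c hc]; apply/eqP; apply/negP => /negP omnz.
have [u [du [hu1 hqz]]] := hf ((c + 1)%:C%C / om).
have := hc u du; rewrite /q hqz /Nm hu1 Rp1 mulr1 mulrC divfK // RpC; lra.
Qed.

Lemma exists_p v1 v2 : dom v1 -> dom v2 ->
  (forall a b : R[i], a *: v1 + b *: v2 = 0 -> a = 0 /\ b = 0) ->
  exists p, dom p /\ ip p v1 = 0 /\ ip p v2 = 1.
Proof.
move=> d1 d2 ind.
have v1nz : v1 != 0.
  apply/eqP => h; have := ind 1 0; rewrite h scaler0 scale0r addr0 => /(_ erefl) [].
  by move/eqP; rewrite oner_eq0.
have I1 : ip v1 v1 != 0.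
  by rewrite (ipself HS v1); apply: neq0_Rp; rewrite RpC gt_eqF // Nm_gt0.
pose c := ip v2 v1 / ip v1 v1.
pose p' := v2 - c *: v1.
have dp' : dom p' by rewrite /p'; apply: domD => //; rewrite -scaleN1r; apply: domZ; apply: domZ.
have p'nz : p' != 0.
  apply/eqP => h; have := ind (- c) 1.
  rewrite scale1r scaleNr addrC -/(v2 - c *: v1) -/p' h => /(_ erefl) [_].
  by move/eqP; rewrite oner_eq0.
have hp1 : ip p' v1 = 0 by rewrite /p' ipBl ipZl /c divfK // subrr.
have hp2 : ip p' v2 = (Nm p')%:C%C.
  rewrite -(ipself HS p'); rewrite {3}/p' ipBr ipZr hp1 mulr0 subr0 //.
have g0 : (Nm p')%:C%C != 0 :> R[i] by apply: neq0_Rp; rewrite RpC gt_eqF // Nm_gt0.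
exists ((Nm p')%:C%C^-1 *: p'); split; first exact: domZ.
by rewrite !ipZl hp1 mulr0 hp2 mulVf.
Qed.

End App2.
Lemma conjM' (R : realType) (x y : R[i]) : (x^* * y)^* = x * y^*.
Proof. by cplx_ring. Qed.

Section LemB.
Variable R : realType.
Variable H : lmodType R[i].
Variable HS : Hilbert H.
Variable T : LinOp H.
Local Notation ip := (ip HS).
Local Notation Nm := (Nm HS).
Local Notation dom := (dom T).
Local Notation op := (op T).
Local Notation q := (q HS T).
Local Notation Bdd := (Bdd HS T).

Lemma lemB v1 v2 p1 p2 (om1 om2 : R[i]) :
  dom p1 -> dom p2 -> ip p1 v1 = 0 -> ip p1 v2 = 1 -> ip p2 v2 = 0 -> ip p2 v1 = 1 ->
  om1 != 0 -> om2 != 0 ->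
  Bdd (perp_dom HS T v1) om1 -> Bdd (perp_dom HS T v2) om2 -> Bdd dom (om1 + om2).
Proof.
move=> d1 d2 h11 h12 h22 h21 nz1 nz2 [c1 hc1] [c2 hc2].
set om := om1 + om2.
pose k1 := (om / om1)^*; pose k2 := (om / om2)^*.
pose Q1 := q p1; pose Q2 := q p2.
pose S12 := ip (op p1) p2; pose S21 := ip (op p2) p1.
pose g1 := om - om1 * k1; pose g2 := om - om2 * k2.
pose r1 := om * Q1 - om1 * (k1 * k1^*) * Q1.
pose r2 := om * Q2 - om2 * (k2 * k2^*) * Q2.
pose s1 := om * S12; pose s2 := om * S21.
pose C1 := `|c1|; pose C2 := `|c2|.
have C10 : 0 <= C1 by rewrite normr_ge0.
have C20 : 0 <= C2 by rewrite normr_ge0.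
have cC1 : c1 <= C1 by rewrite ler_norm.
have cC2 : c2 <= C2 by rewrite ler_norm.
pose A1 := 2 * C1 + 2 * C2 + 1.
pose A2 := 2 * C1 * sq k1 * Nm p1 + sq g1 * Nm (op p1) / 2 + `|Rp r1| + sq s1 / 2 + 1 / 2.
pose A3 := 2 * C2 * sq k2 * Nm p2 + sq g2 * Nm (op p2) / 2 + `|Rp r2| + sq s2 / 2 + 1 / 2.
have sk1 := sq_ge0 k1; have sk2 := sq_ge0 k2; have sg1 := sq_ge0 g1; have sg2 := sq_ge0 g2.
have ss1 := sq_ge0 s1; have ss2 := sq_ge0 s2.
have np1 := Nm_ge0 HS p1; have np2 := Nm_ge0 HS p2.
have nt1 := Nm_ge0 HS (op p1); have nt2 := Nm_ge0 HS (op p2).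
have nr1 := normr_ge0 (Rp r1); have nr2 := normr_ge0 (Rp r2).
have A10 : 0 <= A1 by rewrite /A1; lra.
have A20 : 0 <= A2.
  rewrite /A2; have := mulr_ge0 (mulr_ge0 C10 sk1) np1; have := mulr_ge0 sg1 nt1; lra.
have A30 : 0 <= A3.
  rewrite /A3; have := mulr_ge0 (mulr_ge0 C20 sk2) np2; have := mulr_ge0 sg2 nt2; lra.
have B20 : 0 <= 2 * A1 * Nm p1 + A2 by have := mulr_ge0 A10 np1; lra.
have B30 : 0 <= 4 * A1 * Nm p2 + A3 by have := mulr_ge0 A10 np2; lra.
pose C := 4 * A1 + (2 * A1 * Nm p1 + A2) * Nm v2 + (4 * A1 * Nm p2 + A3) * Nm v1.
exists C => u du.
set a := ip u v2; set b := ip u v1.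
pose n := u - b *: p2 - a *: p1.
have dp2 : dom (b *: p2) by apply: domZ.
have dp1 : dom (a *: p1) by apply: domZ.
have dn : dom n.
  rewrite /n; apply: domD; [apply: domD => // | ]; rewrite -scaleN1r; exact: domZ.
have hu : u = n + a *: p1 + b *: p2 by rewrite /n !subrK.
have n1 : ip n v1 = 0 by rewrite /n !ipBl !ipZl h21 h11 -/b; ring.
have n2 : ip n v2 = 0 by rewrite /n !ipBl !ipZl h22 h12 -/a; ring.
pose m := n + (k1 * a) *: p1; pose m' := n + (k2 * b) *: p2.
have Mm : perp_dom HS T v1 m.
  split; first by apply: domD => //; apply: domZ.
  by rewrite /m ipDl ipZl n1 h11 mulr0 addr0.
have Mm' : perp_dom HS T v2 m'.
  split; first by apply: domD => //; apply: domZ.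
  by rewrite /m' ipDl ipZl n2 h22 mulr0 addr0.
have e1 := hc1 m Mm; have e2 := hc2 m' Mm'.
set X1 := ip (op p1) n; set X2 := ip (op p2) n.
have Id : om * q u = om1 * q m + om2 * q m' +
   (g1 * a * X1 + g2 * b * X2 + r1 * (a * a^*) + r2 * (b * b^*)
    + s1 * (a * b^*) + s2 * (b * a^*)).
  have -> : q u = q (n + a *: p1 + b *: p2) by rewrite -hu.
  rewrite qexp3 // /m /m' !qexp2 // /g1 /g2 /r1 /r2 /s1 /s2 /Q1 /Q2 /S12 /S21 /k1 /k2.
  rewrite !conjM' !conjK -/X1 -/X2.
  set K1 := (om / om1)^*; set K2 := (om / om2)^*.
  set aJ := a^*; set bJ := b^*.
  rewrite /om; field.
  by rewrite !fmorph_eq0 nz1 nz2.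
have hR := congr1 (@complex.Re R) Id; rewrite !RpD in hR.
set Nn := Nm n; set sqa := sq a; set sqb := sq b.
have nn0 : 0 <= Nn := Nm_ge0 HS n.
have sqa0 : 0 <= sqa := sq_ge0 a.
have sqb0 : 0 <= sqb := sq_ge0 b.
have b1 : Rp (om1 * q m) <= C1 * (2 * Nn + 2 * (sq k1 * sqa) * Nm p1).
  have hm : Nm m <= 2 * Nn + 2 * (sq k1 * sqa) * Nm p1.
    have := Nm_add HS n ((k1 * a) *: p1); rewrite Nm_scale sqM -/m -/Nn -/sqa; lra.
  apply: (le_trans e1); apply: (le_trans (ler_wpM2r (Nm_ge0 HS m) cC1)).
  exact: (ler_wpM2l C10 hm).
have b2 : Rp (om2 * q m') <= C2 * (2 * Nn + 2 * (sq k2 * sqb) * Nm p2).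
  have hm : Nm m' <= 2 * Nn + 2 * (sq k2 * sqb) * Nm p2.
    have := Nm_add HS n ((k2 * b) *: p2); rewrite Nm_scale sqM -/m' -/Nn -/sqb; lra.
  apply: (le_trans e2); apply: (le_trans (ler_wpM2r (Nm_ge0 HS m') cC2)).
  exact: (ler_wpM2l C20 hm).
have b3 : 2 * Rp (g1 * a * X1) <= sq g1 * sqa * Nm (op p1) + Nn.
  by have := ipCS HS (g1 * a) (op p1) n; rewrite sqM.
have b4 : 2 * Rp (g2 * b * X2) <= sq g2 * sqb * Nm (op p2) + Nn.
  by have := ipCS HS (g2 * b) (op p2) n; rewrite sqM.
have b5 : Rp (r1 * (a * a^*)) <= `|Rp r1| * sqa.
  rewrite mulJ mulrC RpCM -/sqa mulrC.
  exact: (ler_wpM2r sqa0 (ler_norm _)).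
have b6 : Rp (r2 * (b * b^*)) <= `|Rp r2| * sqb.
  rewrite mulJ mulrC RpCM -/sqb mulrC.
  exact: (ler_wpM2r sqb0 (ler_norm _)).
have b7 : 2 * Rp (s1 * (a * b^*)) <= sq s1 * sqa + sqb.
  by rewrite mulrA; have := reCS (s1 * a) b; rewrite sqM.
have b8 : 2 * Rp (s2 * (b * a^*)) <= sq s2 * sqb + sqa.
  by rewrite mulrA; have := reCS (s2 * b) a; rewrite sqM.
have hsum : Rp (om * q u) <= A1 * Nn + A2 * sqa + A3 * sqb.
  rewrite hR /A1 /A2 /A3; lra.
have hn : Nn <= 4 * Nm u + 4 * (sqb * Nm p2) + 2 * (sqa * Nm p1).
  have h1 := Nm_sub HS (u - b *: p2) (a *: p1).
  have h2 := Nm_sub HS u (b *: p2).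
  rewrite !Nm_scale -/sqa -/sqb in h1 h2; rewrite /Nn /n; lra.
have ha : sqa <= Nm u * Nm v2 := ipCS1 HS u v2.
have hb : sqb <= Nm u * Nm v1 := ipCS1 HS u v1.
have f1 := ler_wpM2l A10 hn.
have f2 := ler_wpM2l B20 ha.
have f3 := ler_wpM2l B30 hb.
rewrite /C; lra.
Qed.
End LemB.
Section MainI.
Variable R : realType.
Variable H : lmodType R[i].
Variable HS : Hilbert H.
Variable T : LinOp H.
Local Notation ip := (ip HS).
Local Notation Nm := (Nm HS).
Local Notation dom := (dom T).
Local Notation op := (op T).
Local Notation q := (q HS T).
Local Notation Bdd := (Bdd HS T).
Local Notation perp := (perp_dom HS T).

Lemma perp0 v : perp v 0.
Proof. by split; [exact: dom0 | rewrite ip0l]. Qed.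
Lemma perpD v u w : perp v u -> perp v w -> perp v (u + w).
Proof. by move=> [du hu] [dw hw]; split; [exact: domD | rewrite ipDl hu hw addr0]. Qed.
Lemma perpZ v (a : R[i]) u : perp v u -> perp v (a *: u).
Proof. by move=> [du hu]; split; [exact: domZ | rewrite ipZl hu mulr0]. Qed.
Lemma perp_dom' v u : perp v u -> dom u.
Proof. by case. Qed.

Lemma sep_perp v : ~ numrange_full HS T (perp v) -> exists om, om != 0 /\ Bdd (perp v) om.
Proof.
apply: sep_app; [exact: perp0 | exact: perpD | exact: perpZ | exact: perp_dom'].
Qed.

Lemma comb_eq (x y : H) (a b t1 t2 : R[i]) :
  a *: (y + t1 *: x) + b *: (y + t2 *: x) = (a * t1 + b * t2) *: x + (a + b) *: y.
Proof.
rewrite !scalerDr !scalerA !scalerDl.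
by rewrite addrACA addrC.
Qed.

Lemma pair_lemma (x y : H) (t1 t2 om1 om2 : R[i]) :
  dom x -> dom y ->
  (forall a b : R[i], a *: x + b *: y = 0 -> a = 0 /\ b = 0) ->
  t1 != t2 -> om1 != 0 -> om2 != 0 -> numrange_full HS T dom ->
  Bdd (perp (y + t1 *: x)) om1 -> Bdd (perp (y + t2 *: x)) om2 -> om1 + om2 = 0.
Proof.
move=> dx dy ind t12 nz1 nz2 hf B1 B2.
set v1 := y + t1 *: x; set v2 := y + t2 *: x.
have dv1 : dom v1 by apply: domD => //; apply: domZ.
have dv2 : dom v2 by apply: domD => //; apply: domZ.
have ind12 : forall a b : R[i], a *: v1 + b *: v2 = 0 -> a = 0 /\ b = 0.
  move=> a b; rewrite /v1 /v2 comb_eq => /ind [h1 h2].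
  have hb : b = - a by apply/eqP; rewrite -addr_eq0 addrC h2.
  have ha : a * (t1 - t2) = 0.
    by have -> : a * (t1 - t2) = a * t1 + b * t2 by rewrite hb; ring.
  move/eqP: ha; rewrite mulf_eq0 subr_eq0 (negPf t12) orbF => /eqP a0.
  by split => //; rewrite hb a0 oppr0.
have ind21 : forall a b : R[i], a *: v2 + b *: v1 = 0 -> a = 0 /\ b = 0.
  by move=> a b; rewrite addrC => /ind12 [? ?].
have [p1 [dp1 [hp11 hp12]]] := exists_p HS dv1 dv2 ind12.
have [p2 [dp2 [hp22 hp21]]] := exists_p HS dv2 dv1 ind21.
have := lemB dp1 dp2 hp11 hp12 hp22 hp21 nz1 nz2 B1 B2.
exact: bdd_dom.
Qed.
End MainI.
Section MainI2.
Variable R : realType.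
Variable H : lmodType R[i].
Variable HS : Hilbert H.
Variable T : LinOp H.
Local Notation ip := (ip HS).
Local Notation dom := (dom T).
Local Notation perp := (perp_dom HS T).

Lemma partI : numrange_full HS T dom ->
  forall x y : H, dom x -> dom y -> ip x x = 1 -> ip y y = 1 ->
     (forall a b : R[i], a *: x + b *: y = 0 -> a = 0 /\ b = 0) ->
     exists s : seq R[i], (size s <= 3)%N /\
       forall t : R[i], t \notin s -> numrange_full HS T (perp (y + t *: x)).
Proof.
move=> hf x y dx dy hx hy ind.
pose P t := ~ numrange_full HS T (perp (y + t *: x)).
have no3 : forall t1 t2 t3, P t1 -> P t2 -> P t3 ->
    t1 != t2 -> t1 != t3 -> t2 != t3 -> False.
  move=> t1 t2 t3 P1 P2 P3 n12 n13 n23.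
  have [o1 [z1 B1]] := sep_perp P1.
  have [o2 [z2 B2]] := sep_perp P2.
  have [o3 [z3 B3]] := sep_perp P3.
  have e12 := pair_lemma dx dy ind n12 z1 z2 hf B1 B2.
  have e13 := pair_lemma dx dy ind n13 z1 z3 hf B1 B3.
  have e23 := pair_lemma dx dy ind n23 z2 z3 hf B2 B3.
  have h : o1 *+ 2 = 0.
    have -> : o1 *+ 2 = (o1 + o2) + (o1 + o3) - (o2 + o3) by rewrite mulr2n; ring.
    by rewrite e12 e13 e23 addr0 subrr.
  by move/eqP: h; rewrite mulrn_eq0 /= (negPf z1).
have full : forall t, ~ P t -> numrange_full HS T (perp (y + t *: x)).
  by move=> t h; apply: NNPP.
case: (classic (exists t1, P t1)) => [[t1 P1] | no1]; last first.
  by exists [::]; split => // t _; apply: full => Pt; apply: no1; exists t.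
case: (classic (exists t2, P t2 /\ t2 != t1)) => [[t2 [P2 n21]] | no2]; last first.
  exists [:: t1]; split => // t; rewrite inE => nt; apply: full => Pt.
  by apply: no2; exists t.
exists [:: t1; t2]; split => // t; rewrite !inE negb_or => /andP [nt1 nt2].
apply: full => Pt.
by apply: (no3 t1 t2 t) => //; rewrite eq_sym.
Qed.
End MainI2.
Lemma sq_add (R : realType) (x y : R[i]) : sq (x + y) <= 2 * sq x + 2 * sq y.
Proof.
rewrite /sq RpD IpD.
have := sqr_ge0 (Rp x - Rp y); have := sqr_ge0 (Ip x - Ip y).
rewrite !expr2; lra.
Qed.

Lemma normc_sq (R : realType) (z : R[i]) : ComplexField.Normc.normc z = Num.sqrt (sq z).
Proof. by case: z. Qed.

Lemma dist_nat (R : realType) (de : R) (k l : nat) : 0 < de -> (0 < k)%N -> (0 < l)%N -> k != l ->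
  ((de / k%:R)%:C%C != (de / l%:R)%:C%C :> R[i]).
Proof.
move=> de0 k0 l0 kl; apply/negP => /eqP /complexI /eqP.
have kz : (k%:R : R) != 0 by rewrite pnatr_eq0 -lt0n.
have lz : (l%:R : R) != 0 by rewrite pnatr_eq0 -lt0n.
have dz : de != 0 by rewrite gt_eqF.
rewrite (eqr_div _ _ kz lz) (inj_eq (mulfI dz)) eqr_nat eq_sym.
by rewrite (negPf kl).
Qed.

Lemma pick (R : realType) (s : seq R[i]) (de : R) : (size s <= 3)%N -> 0 < de ->
  exists r : R, 0 < r /\ r <= de /\ (r%:C%C \notin s).
Proof.
move=> ss de0.
case: (classic (exists r : R, 0 < r /\ r <= de /\ (r%:C%C \notin s))) => // hn.
exfalso.
have hin : forall r : R, 0 < r -> r <= de -> r%:C%C \in s.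
  move=> r r0 rde; apply/negPn/negP => h; apply: hn; exists r; split => //.
have hk : forall k : nat, (0 < k)%N -> (de / k%:R)%:C%C \in s.
  move=> k k0; apply: hin; first by rewrite divr_gt0 // ltr0n.
  rewrite ler_pdivrMr ?ltr0n //.
  have h1 : (1 : R) <= k%:R by rewrite ler1n.
  by have := ler_wpM2l (ltW de0) h1; rewrite mulr1.
pose L := [:: (de / 1%:R)%:C%C; (de / 2%:R)%:C%C; (de / 3%:R)%:C%C; (de / 4%:R)%:C%C].
have uL : uniq L.
  rewrite /L /= !inE !negb_or !dist_nat //.
have sL : {subset L <= s}.
  by move=> z; rewrite /L !inE => /or4P [] /eqP ->; apply: hk.
have := uniq_leq_size uL sL.
by rewrite /L /= => h; have := leq_trans h ss.
Qed.

Section MainII.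
Variable R : realType.
Variable H : lmodType R[i].
Variable HS : Hilbert H.
Variable T : LinOp H.
Local Notation ip := (ip HS).
Local Notation Nm := (Nm HS).
Local Notation dom := (dom T).
Local Notation op := (op T).
Local Notation q := (q HS T).
Local Notation perp := (perp_dom HS T).

Lemma normalize u : u != 0 -> exists c : R, ip (c%:C%C *: u) (c%:C%C *: u) = 1.
Proof.
move=> unz.
have hn := Nm_gt0 HS unz.
set n := Nm u in hn.
pose c := (Num.sqrt n)^-1.
have sp : 0 < Num.sqrt n by rewrite sqrtr_gt0.
have hc : c * c * n = 1.
  rewrite /c -expr2 exprVn sqr_sqrtr ?ltW // mulVf // gt_eqF //.
exists c.
by rewrite ipZl ipZr conjR (ipself HS u) -/n -!rmorphM mulrA hc rmorph1.
Qed.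


Lemma partII : numrange_full HS T dom ->
  forall y : H, dom y -> ip y y = 1 ->
     (exists z : H, perp y z /\ z <> 0) ->
     forall eps : R, 0 < eps ->
       exists w : H, dom w /\ ip w w = 1 /\
         numrange_full HS T (perp w) /\
         ComplexField.Normc.normc (ip (op w) w - ip (op y) y) < eps.
Proof.
move=> hf y dy hy [z0 [[dz0 hz0] z0nz]] eps eps0.
have z0nz' : z0 != 0 by apply/eqP.
have [c hc] := normalize z0nz'.
pose x := c%:C%C *: z0.
have dx : dom x by apply: domZ.
have hx : ip x x = 1 := hc.
have hxy : ip x y = 0 by rewrite ipZl hz0 mulr0.
have hyx : ip y x = 0 by rewrite (ip_conj HS x y) hxy rmorph0.
clearbody x.
have ind : forall a b : R[i], a *: x + b *: y = 0 -> a = 0 /\ b = 0.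
  move=> a b h.
  have hb : b = 0.
    have := congr1 (fun v => ip v y) h.
    by rewrite /= ipDl !ipZl hxy hy ip0l mulr0 add0r mulr1.
  split => //; move: h; rewrite hb scale0r addr0 => /eqP.
  rewrite scaler_eq0 => /orP [/eqP // | /eqP x0].
  by move: hx; rewrite x0 ip0l => /eqP; rewrite eq_sym oner_eq0.
have [s [ss hs]] := partI hf dx dy hx hy ind.
set Ky := ip (op x) y + ip (op y) x.
set Dq := q x - q y.
pose X := 2 * (sq Ky + sq Dq).
have X0 : 0 <= X by rewrite /X; have := sq_ge0 Ky; have := sq_ge0 Dq; lra.
have e2 : 0 < eps ^+ 2 by rewrite exprn_gt0.
pose de := eps ^+ 2 / (X + 1 + eps ^+ 2).
have den : 0 < X + 1 + eps ^+ 2 by lra.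
have de0 : 0 < de by rewrite divr_gt0.
have de1 : de <= 1 by rewrite ler_pdivrMr // mul1r; lra.
have deX : de * (X + 1) <= eps ^+ 2.
  rewrite /de mulrAC ler_pdivrMr //.
  have := mulr_ge0 (ltW e2) (ltW e2); rewrite -!expr2; lra.
have [r [r0 [rde rs]]] := pick ss de0.
set t := r%:C%C.
have full := hs t rs.
pose v := y + t *: x.
have hv : ip v v = (1 + r * r)%:C%C.
  rewrite /v ipDl !ipDr !ipZl !ipZr hxy hyx hx hy /t conjR.
  by rewrite rmorphD rmorphM rmorph1; ring.
have r2 : 0 <= r * r by rewrite mulr_ge0 // ltW.
have sp : 0 < Num.sqrt (1 + r * r) by rewrite sqrtr_gt0; lra.
pose d := (Num.sqrt (1 + r * r))^-1.
have hd2 : d * d * (1 + r * r) = 1.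
  rewrite /d -expr2 exprVn sqr_sqrtr ?mulVf // ?gt_eqF //; lra.
have dd0 : 0 <= d * d by rewrite -expr2 sqr_ge0.
have dd1 : d * d <= 1.
  have := mulr_ge0 dd0 r2; rewrite mulrDr mulr1 in hd2; lra.
pose w := d%:C%C *: v.
have dv : dom v by apply: domD => //; apply: domZ.
exists w; split; first by apply: domZ.
split.
  rewrite /w ipZl ipZr conjR hv -!rmorphM mulrA hd2 //.
split.
  move=> z; have [u [[du hu0] [hu1 hu2]]] := full z.
  exists u; split => //; split => //.
  by rewrite /w ipZr hu0 mulr0.
have qw : q w = (d * d)%:C%C * q v.
  by rewrite /q /w opZ // ipZl ipZr conjR rmorphM; ring.
have qv : q v = q y + t * Ky + t * t * q x.
  by rewrite /v qexp2 // /t conjR /Ky; ring.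
have hdc : (d * d)%:C%C * (1 + t * t) = 1.
  have -> : (d * d)%:C%C * (1 + t * t) = ((d * d) * (1 + r * r))%:C%C.
    by rewrite /t !rmorphM rmorphD rmorph1 rmorphM.
  by rewrite hd2.
have hdiff : ip (op w) w - ip (op y) y = (d * d)%:C%C * (t * Ky + t * t * Dq).
  rewrite -/(q w) -/(q y) qw qv /Dq.
  apply/eqP; rewrite -subr_eq0; apply/eqP.
  have -> : (d * d)%:C%C * (q y + t * Ky + t * t * q x) - q y -
      (d * d)%:C%C * (t * Ky + t * t * (q x - q y)) =
      ((d * d)%:C%C * (1 + t * t) - 1) * q y by ring.
  by rewrite hdc subrr mul0r.
rewrite hdiff normc_sq.
have sqz : sq ((d * d)%:C%C * (t * Ky + t * t * Dq)) <= r * r * X.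
  rewrite sqM sqC.
  have hZ := sq_add (t * Ky) (t * t * Dq).
  rewrite !sqM /t sqC in hZ.
  have sK := sq_ge0 Ky; have sD := sq_ge0 Dq.
  have r1 : r <= 1 by lra.
  have rr1 : r * r <= 1.
    by have := ler_wpM2l (ltW r0) r1; rewrite mulr1; lra.
  have sZ := sq_ge0 (t * Ky + t * t * Dq).
  set Z := sq (t * Ky + t * t * Dq) in hZ sZ *.
  have f1 : (d * d) ^+ 2 * Z <= Z.
    rewrite expr2; have := ler_wpM2l dd0 dd1; rewrite mulr1 => h.
    by have := ler_wpM2r sZ (le_trans h dd1); rewrite mul1r.
  have f2 : r ^+ 2 * r ^+ 2 * sq Dq <= r ^+ 2 * sq Dq.
    rewrite !expr2; have := ler_wpM2r sD rr1; rewrite mul1r => h.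
    by have := ler_wpM2l r2 h; rewrite !mulrA.
  apply: (le_trans f1); rewrite /X; rewrite !expr2 in hZ f2 *; lra.
have rX : r * r * X < eps ^+ 2.
  have r1 : r <= 1 by lra.
  have h1 : r * r * X <= r * X.
    by have := ler_wpM2r X0 (ler_wpM2l (ltW r0) r1); rewrite mulr1.
  have h2 : r * X <= de * X by apply: ler_wpM2r.
  lra.
have := le_lt_trans sqz rX.
rewrite -(ltr_sqrt _ e2) sqrtr_sqr ger0_norm //; exact: ltW.
Qed.
End MainII.

Theorem lemma2p7 (R : realType) (H : lmodType R[i]) (HS : Hilbert H) (T : LinOp H) :
  numrange_full HS T (dom T) ->
  (* (i) *)
  (forall x y : H, dom T x -> dom T y -> ip HS x x = 1 -> ip HS y y = 1 ->
     (forall a b : R[i], a *: x + b *: y = 0 -> a = 0 /\ b = 0) ->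
     exists s : seq R[i], (size s <= 3)%N /\
       forall t : R[i], t \notin s -> numrange_full HS T (perp_dom HS T (y + t *: x)))
  /\
  (* (ii) *)
  (forall y : H, dom T y -> ip HS y y = 1 ->
     (exists z : H, perp_dom HS T y z /\ z <> 0) ->
     forall eps : R, 0 < eps ->
       exists w : H, dom T w /\ ip HS w w = 1 /\
         numrange_full HS T (perp_dom HS T w) /\
         ComplexField.Normc.normc (ip HS (op T w) w - ip HS (op T y) y) < eps).
Proof.
move=> hf; split.
- exact: partI hf.
- exact: partII hf.
Qed.
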